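(* Let $\kappa_1>0$, $\kappa_2>0$ and $C\ge0$. Let $f$ be a nonnegative continuous function on $(0,1]$ such that $\int_0^1 f<+\infty$. Assume that $G:[0,1]\to[0,+\infty)$ is continuous on $[0,1]$, of class $\mathcal{C}^1$ on $(0,1]$, and satisfies on $(0,1]$ the differential inequality $$G'(t)\le Ct^{\kappa_1-1}G(t)+f(t)\sqrt{G(t)}+Ct^{\kappa_2-1},\qquad G(0)=0.$$ Then for all $t\in[0,1]$, $$G(t)\lesssim\Big(\int_0^t f\Big)^2+t^{\kappa_2},$$ where the implicit constant depends only on $\kappa_1,\kappa_2,C$. *)

(* Defs.v *)
From HB Require Import structures.
From mathcomp Require Import all_boot all_order all_algebra.
From mathcomp Require Import all_classical all_reals all_analysis.
Set Implicit Arguments. Unset Strict Implicit. Unset Printing Implicit Defensive.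

(* Main.v *)
Require Import Defs.
From HB Require Import structures.
From mathcomp Require Import all_boot all_order all_algebra.
From mathcomp Require Import all_classical all_reals all_analysis.
From mathcomp Require Import ring lra measurable_realfun.
Import Order.TTheory GRing.Theory Num.Theory.
Import numFieldNormedType.Exports.
Local Open Scope classical_set_scope.
Local Open Scope ring_scope.
Lemma dPhi (R : realType) (k1 k2 C sM : R) (G P : R -> R) (x g' p : R) :
  0 < k1 -> 0 < k2 -> 0 < x ->
  is_derive x 1 G g' -> is_derive x 1 P p ->
  is_derive x 1 (fun y => expR (- (C / k1) * y `^ k1) * G y - sM * P y - C / k2 * y `^ k2)
    (expR (- (C / k1) * x `^ k1) * (g' - C * x `^ (k1 - 1) * G x) - sM * p - C * x `^ (k2 - 1)).
Proof.
move=> k10 k20 x0 dG dP.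
have d1 : is_derive x 1 (fun y => - (C / k1) * y `^ k1) (- (C / k1) * (k1 * x `^ (k1 - 1))).
  exact: (is_deriveZ (- (C / k1)) (is_derive1_powR k1 x0)).
have d2 : is_derive x 1 (fun y => expR (- (C / k1) * y `^ k1)) (expR (- (C / k1) * x `^ k1) * (- (C / k1) * (k1 * x `^ (k1 - 1)))).
  exact: (is_derive1_comp (is_derive_expR _) d1).
have d3 : is_derive x 1 (fun y => C / k2 * y `^ k2) (C / k2 * (k2 * x `^ (k2 - 1))).
  exact: (is_deriveZ (C / k2) (is_derive1_powR k2 x0)).
have d4 : is_derive x 1 (fun y => sM * P y) (sM * p).
  exact: (is_deriveZ sM dP).
have d5 := is_deriveM d2 dG.
have d6 := is_deriveB (is_deriveB d5 d4) d3.
case: d6 => h1 h2; apply: DeriveDef; first exact: h1.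
apply: etrans; first exact: h2.
rewrite /GRing.scale /=.
have k1n : k1 != 0 by rewrite gt_eqF.
have k2n : k2 != 0 by rewrite gt_eqF.
idtac.
field; by apply/andP; split.
Qed.

Lemma step1 (R : realType) (k1 k2 C M : R) (f G : R -> R) (a s : R) :
  0 < k1 -> 0 < k2 -> 0 <= C -> 0 <= M ->
  {within `]0, 1], continuous f} ->
  (forall t, 0 < t <= 1 -> 0 <= f t) ->
  (forall t, 0 <= t <= 1 -> 0 <= G t) ->
  (forall t, 0 < t < 1 -> derivable G t 1) ->
  (forall t, 0 < t < 1 ->
       derive1 G t <= C * t `^ (k1 - 1) * G t + f t * Num.sqrt (G t)
                  + C * t `^ (k2 - 1)) ->
  (forall x, a <= x <= s -> G x <= M) ->
  0 < a -> a <= s -> s < 1 ->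
  expR (- (C / k1) * s `^ k1) * G s - Num.sqrt M * (\int[lebesgue_measure]_(t in `[a / 2, s]) f t)
     - C / k2 * s `^ k2
  <= expR (- (C / k1) * a `^ k1) * G a - Num.sqrt M * (\int[lebesgue_measure]_(t in `[a / 2, a]) f t)
     - C / k2 * a `^ k2.
Proof.
move=> hk1 hk2 hC hM cf f0 G0 dG ineq GM a0 las s1.
pose P y := \int[lebesgue_measure]_(t in `[a / 2, y]) f t.
pose Phi y := expR (- (C / k1) * y `^ k1) * G y - Num.sqrt M * P y - C / k2 * y `^ k2.
pose dPh y := expR (- (C / k1) * y `^ k1) * (derive1 G y - C * y `^ (k1 - 1) * G y)
   - Num.sqrt M * f y - C * y `^ (k2 - 1).
have a20 : 0 < a / 2 by rewrite divr_gt0.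
have intf : lebesgue_measure.-integrable `[a / 2, 1] (EFin \o f).
  apply: continuous_compact_integrable; first exact: segment_compact.
  apply: continuous_subspaceW cf; apply: subset_itv; by rewrite bnd_simp.
have cfo : forall x, 0 < x < 1 -> {for x, continuous f}.
  have : {in `]0%R, 1%R[%classic, continuous f}.
    rewrite -continuous_open_subspace; last exact: interval_open.
    apply: continuous_subspaceW cf; apply: subset_itv; by rewrite bnd_simp.
  move=> h x hx; apply: h; rewrite inE /= in_itv /=; exact: hx.
have dP : forall x, a / 2 < x < 1 -> is_derive x 1 Phi (dPh x).
  move=> x /andP[hx1 hx2].
  have x0 : 0 < x by apply: lt_trans hx1.
  have cx : 0 < x < 1 by rewrite x0 hx2.
  have [dP1 dP2] := continuous_FTC1_closed hx2 intf hx1 (cfo x cx).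
  have {}dP1 := derivableP dP1.
  rewrite -derive1E dP2 in dP1.
  have dGx := derivableP (dG x _).
  have {dGx}dGx : is_derive x 1 G (derive1 G x) by rewrite derive1E; apply: dGx; rewrite x0 hx2.
  exact: (@dPhi R k1 k2 C (Num.sqrt M) G P x _ (f x) hk1 hk2 x0 dGx dP1).
have hin : forall x, a <= x <= s -> a / 2 < x < 1.
  move=> x /andP[h1 h2]; apply/andP; split; lra.
have cPhi : {within `[a, s], continuous Phi}.
  apply: derivable_within_continuous => x; rewrite in_itv /= => hx.
  by case: (dP x (hin x hx)).
have hin2 : forall x, x \in `]a, s[ -> a / 2 < x < 1.
  move=> x; rewrite in_itv /= => /andP[h1 h2]; apply: hin; apply/andP; split; lra.
have [c cin eq] := MVT_segment las (fun x hx => dP x (hin2 x hx)) cPhi.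
suff : Phi s - Phi a <= 0 by rewrite /Phi /P; lra.
rewrite eq; apply: mulr_le0_ge0; last by lra.
move: cin; rewrite in_itv /= => /andP[ac cs].
have c0 : 0 < c by lra.
have c1 : c < 1 by lra.
rewrite /dPh; set e := expR (- (C / k1) * c `^ k1).
have e0 : 0 < e by exact: expR_gt0.
have e1 : e <= 1.
  rewrite /e expR_le1 mulNr oppr_le0; apply: mulr_ge0; last exact: powR_ge0.
  by apply: divr_ge0 => //; exact: ltW.
have hi := ineq c (introT andP (conj c0 c1)).
have gc0 : 0 <= G c by apply: G0; apply/andP; split; lra.
have gM : G c <= M by apply: GM; apply/andP; split; lra.
have sq : Num.sqrt (G c) <= Num.sqrt M by rewrite ler_sqrt.
have fc0 : 0 <= f c by apply: f0; apply/andP; split; lra.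
have X0 : 0 <= f c * Num.sqrt (G c) + C * c `^ (k2 - 1).
  apply: addr_ge0; apply: mulr_ge0 => //; by [exact: sqrtr_ge0 | exact: powR_ge0].
have h1 : e * (derive1 G c - C * c `^ (k1 - 1) * G c) <= e * (f c * Num.sqrt (G c) + C * c `^ (k2 - 1)).
  apply: ler_wpM2l; [exact: ltW | lra].
have h2 := ler_piMl X0 e1.
have h3 : f c * Num.sqrt (G c) <= f c * Num.sqrt M by apply: ler_wpM2l.
lra.
Qed.
Local Notation mu := (@lebesgue_measure _).

Lemma Ffacts (R : realType) (f : R -> R) :
  {within `]0, 1], continuous f} ->
  (forall t, 0 < t <= 1 -> 0 <= f t) ->
  (\int[lebesgue_measure]_(x in `]0%R, 1%R]) (f x)%:E < +oo)%E ->
  forall A B : set R, measurable A -> measurable B -> A `<=` B -> B `<=` `]0, 1] ->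
  [/\ (0 <= \int[lebesgue_measure]_(x in A) (f x)%:E)%E,
      (\int[lebesgue_measure]_(x in A) (f x)%:E \is a fin_num)%E &
      fine (\int[lebesgue_measure]_(x in A) (f x)%:E) <=
      fine (\int[lebesgue_measure]_(x in B) (f x)%:E)].
Proof.
move=> cf f0 fint A B mA mB AB B01.
have mf : measurable_fun (`]0%R, 1%R] : set R) (EFin \o f).
  apply/measurable_EFinP; exact: subspace_continuous_measurable_fun.
have f0' : forall x, `]0%R, 1%R]%classic x -> (0 <= (EFin \o f) x)%E.
  by move=> x; rewrite /= in_itv /= lee_fin => /f0.
have ge0 : forall D : set R, D `<=` `]0, 1] -> (0 <= \int[lebesgue_measure]_(x in D) (f x)%:E)%E.
  move=> D D01; apply: integral_ge0 => x /D01 /f0'; done.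
have le1 : forall D : set R, measurable D -> D `<=` `]0, 1] -> (\int[lebesgue_measure]_(x in D) (f x)%:E <= \int[lebesgue_measure]_(x in `]0%R, 1%R]) (f x)%:E)%E.
  move=> D mD D01; exact: (ge0_subset_integral lebesgue_measure mD _ mf f0' D01).
have fin : forall D : set R, measurable D -> D `<=` `]0, 1] -> (\int[lebesgue_measure]_(x in D) (f x)%:E \is a fin_num)%E.
  move=> D mD D01; rewrite ge0_fin_numE; last exact: ge0.
  exact: le_lt_trans (le1 D mD D01) fint.
have A01 : A `<=` `]0, 1] by move=> x /AB /B01.
split; [exact: ge0 | exact: fin |].
apply: fine_le; [exact: fin | exact: fin |].
apply: (ge0_subset_integral lebesgue_measure mA mB) => //.
- exact: measurable_funS mf.
- by move=> x /B01 /f0'.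
Qed.

Lemma arith (R : realFieldType) (X SF D EG Ga SP SPa Da : R) :
  SF + D < X -> Ga < X - (SF + D) -> X - SP - D <= EG - SPa - Da -> SP <= SF ->
  0 <= SPa -> EG <= Ga -> 0 <= Da -> False.
Proof. move=> *; lra. Qed.

Lemma exists_small (R : realType) (G : R -> R) (z s : R) :
  G x @[x --> 0^'+] --> 0 -> 0 < z -> 0 < s -> exists a, [/\ 0 < a, a <= s & G a < z].
Proof.
move=> lim0 z0 s0.
have nearG := cvgr_lt 0 lim0 z z0.
near (0:R)^'+ => a.
exists a; split.
- by near: a; exact: nbhs_right_gt.
- by near: a; exact: nbhs_right_le.
- by near: a; exact: nearG.
Unshelve. all: by end_near.
Qed.

Lemma step2 (R : realType) (k1 k2 C M : R) (f G : R -> R) (t0 s : R) :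
  0 < k1 -> 0 < k2 -> 0 <= C -> 0 <= M ->
  {within `]0, 1], continuous f} ->
  (forall t, 0 < t <= 1 -> 0 <= f t) ->
  (\int[lebesgue_measure]_(x in `]0%R, 1%R]) (f x)%:E < +oo)%E ->
  {within `[0, 1], continuous G} ->
  (forall t, 0 <= t <= 1 -> 0 <= G t) ->
  G 0 = 0 ->
  (forall t, 0 < t < 1 -> derivable G t 1) ->
  (forall t, 0 < t < 1 ->
       derive1 G t <= C * t `^ (k1 - 1) * G t + f t * Num.sqrt (G t)
                  + C * t `^ (k2 - 1)) ->
  t0 < 1 -> (forall x, 0 < x <= t0 -> G x <= M) -> 0 < s -> s <= t0 ->
  expR (- (C / k1) * s `^ k1) * G s <=
    Num.sqrt M * fine (\int[lebesgue_measure]_(x in `]0%R, s]) (f x)%:E) + C / k2 * s `^ k2.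
Proof.
move=> hk1 hk2 hC hM cf f0 fint cG G0 Gat0 dG ineq t01 GM s0 st0.
have lim0 : G x @[x --> 0^'+] --> 0.
  have [_ h _] := (continuous_within_itvP G ltr01).1 cG.
  by move: h; rewrite Gat0.
rewrite leNgt; apply/negP => hlt.
set B := (X in X < _) in hlt.
set z := expR (- (C / k1) * s `^ k1) * G s - B.
have z0 : 0 < z by rewrite /z subr_gt0.
have [a [a0 [as_ Ga]]] := exists_small R G z s lim0 z0 s0.
have s1 : s < 1 by lra.
have GM' : forall x, a <= x <= s -> G x <= M.
  move=> x /andP[h1 h2]; apply: GM; apply/andP; split; lra.
have := step1 R k1 k2 C M f G a s hk1 hk2 hC hM cf f0 G0 dG ineq GM' a0 as_ s1.
have Pa : 0 <= \int[lebesgue_measure]_(t in `[a / 2, a]) f t.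
  apply: Rintegral_ge0 => x; rewrite /= in_itv /= => /andP[h1 h2].
  apply: f0; apply/andP; split; lra.
have sub1 : `[a / 2, s] `<=` `]0, s].
  by apply: subset_itv; rewrite bnd_simp; lra.
have sub2 : `]0, s] `<=` `]0, 1].
  by apply: subset_itv; rewrite bnd_simp; lra.
have [_ _ Ps] := Ffacts R f cf f0 fint `[a / 2, s] `]0, s] (measurable_itv _) (measurable_itv _) sub1 sub2.
have ea : expR (- (C / k1) * a `^ k1) * G a <= G a.
  apply: ler_piMl; first by apply: G0; apply/andP; split; lra.
  rewrite expR_le1 mulNr oppr_le0; apply: mulr_ge0; last exact: powR_ge0.
  by apply: divr_ge0 => //; exact: ltW.
have Da : 0 <= C / k2 * a `^ k2 by apply: mulr_ge0; [apply: divr_ge0 => //; exact: ltW | exact: powR_ge0].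
have sM := sqrtr_ge0 M.
have := ler_wpM2l sM Ps.
rewrite /z /B in hlt Ga *.
move=> h1 h2; rewrite /Rintegral in Pa h2; have h3 := mulr_ge0 sM Pa; exact: (arith R _ _ _ _ _ _ _ _ hlt Ga h2 h1 h3 ea Da).
Qed.

Lemma alg2 (R : realFieldType) (L F D T M y : R) :
  1 <= L -> 0 <= F -> 0 <= D -> 0 <= T -> 0 <= y -> M = y ^+ 2 ->
  M <= L * (y * F + D * T) -> M <= L ^+ 2 * (1 + 2 * D) * (F ^+ 2 + T).
Proof.
move=> L1 F0 D0 T0 y0 -> h.
have h1 : y ^+ 2 <= (L * F) ^+ 2 + 2 * (L * D * T).
  have := sqr_ge0 (y - L * F); nra.
have h2 : L * D * T <= L ^+ 2 * D * T.
  have : 0 <= (L ^+ 2 - L) * (D * T) by apply: mulr_ge0; [nra | exact: mulr_ge0].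
  nra.
have h3 : 0 <= L ^+ 2 * (2 * D) * F ^+ 2.
  by apply: mulr_ge0; [apply: mulr_ge0; [exact: sqr_ge0 | nra] | exact: sqr_ge0].
nra.
Qed.

Lemma mainlt (R : realType) (k1 k2 C : R) (f G : R -> R) (t0 : R) :
  0 < k1 -> 0 < k2 -> 0 <= C ->
  {within `]0, 1], continuous f} ->
  (forall t, 0 < t <= 1 -> 0 <= f t) ->
  (\int[lebesgue_measure]_(x in `]0%R, 1%R]) (f x)%:E < +oo)%E ->
  {within `[0, 1], continuous G} ->
  (forall t, 0 <= t <= 1 -> 0 <= G t) ->
  G 0 = 0 ->
  (forall t, 0 < t < 1 -> derivable G t 1) ->
  (forall t, 0 < t < 1 ->
       derive1 G t <= C * t `^ (k1 - 1) * G t + f t * Num.sqrt (G t)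
                  + C * t `^ (k2 - 1)) ->
  0 < t0 -> t0 < 1 ->
  G t0 <= expR (C / k1) ^+ 2 * (1 + 2 * (C / k2)) *
     ((fine (\int[lebesgue_measure]_(x in `]0%R, t0]) (f x)%:E)) ^+ 2 + t0 `^ k2).
Proof.
move=> hk1 hk2 hC cf f0 fint cG G0 Gat0 dG ineq t00 t01.
have cG0 : {within `[0, t0], continuous G}.
  apply: continuous_subspaceW cG; apply: subset_itv; rewrite bnd_simp; lra.
have [c cin cmax] := EVT_max (ltW t00) cG0.
move: cin; rewrite in_itv /= => /andP[c0 ct0].
set M := G c.
have hM : 0 <= M by apply: G0; apply/andP; split; lra.
have GM : forall x, 0 < x <= t0 -> G x <= M.
  move=> x /andP[h1 h2]; apply: cmax; rewrite in_itv /=; apply/andP; split; lra.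
set L := expR (C / k1).
have L1 : 1 <= L.
  apply: le_trans (expR_ge1Dx _); rewrite lerDl; apply: divr_ge0 => //; exact: ltW.
have D0 : 0 <= C / k2 by apply: divr_ge0 => //; exact: ltW.
set Ft := fine _.
have sub0 : `]0, t0] `<=` `]0, 1].
  by apply: subset_itv; rewrite bnd_simp; lra.
have [Ft0 _ _] := Ffacts R f cf f0 fint `]0, t0] `]0, t0] (measurable_itv _) (measurable_itv _)
   (@subset_refl _ _) sub0.
have {}Ft0 : 0 <= Ft by apply: fine_ge0.
have T0 : 0 <= t0 `^ k2 by exact: powR_ge0.
have Gt0 : G t0 <= M by apply: GM; rewrite t00 lexx.
apply: le_trans Gt0 _.
have Mb : M <= L * (Num.sqrt M * Ft + C / k2 * t0 `^ k2).
  have [c0'|cn0] := eqVneq c 0.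
    rewrite /M c0' Gat0; apply: mulr_ge0; first lra.
    by apply: addr_ge0; apply: mulr_ge0 => //; exact: sqrtr_ge0.
  have cpos : 0 < c by rewrite lt_def cn0 c0.
  have st := step2 R k1 k2 C M f G t0 c hk1 hk2 hC hM cf f0 fint cG G0 Gat0 dG ineq t01 GM cpos ct0.
  have powle : c `^ k1 <= 1.
    have := @ge0_ler_powR R k1 (ltW hk1) c 1; rewrite powR1 !nnegrE; apply => //; lra.
  have LE : 1 <= L * expR (- (C / k1) * c `^ k1).
    rewrite /L -expRD; apply: le_trans (expR_ge1Dx _); rewrite lerDl.
    have Ck : 0 <= C / k1 by apply: divr_ge0 => //; exact: ltW.
    have d1 : 0 <= 1 - c `^ k1 by lra.
    have := mulr_ge0 Ck d1; nra.
  have h1 : M <= L * (expR (- (C / k1) * c `^ k1) * M).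
    rewrite mulrA; have := ler_wpM2l hM LE; rewrite mulr1 mulrC; apply.
  apply: le_trans h1 _.
  have Lp : 0 <= L by lra.
  apply: ler_wpM2l => //; apply: le_trans st _.
  have ct1 : c <= 1 by lra.
  have subc : `]0, c] `<=` `]0, t0] by apply: subset_itv; rewrite bnd_simp.
  have [_ _ Fc] := Ffacts R f cf f0 fint `]0, c] `]0, t0] (measurable_itv _) (measurable_itv _) subc sub0.
  have pc : c `^ k2 <= t0 `^ k2.
    by apply: (@ge0_ler_powR R k2 (ltW hk2)) => //; rewrite nnegrE; lra.
  apply: lerD; first by apply: ler_wpM2l => //; exact: sqrtr_ge0.
  by apply: ler_wpM2l.
apply: (alg2 R _ _ _ _ _ _ L1 Ft0 D0 T0 (sqrtr_ge0 M) _ Mb).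
by rewrite sqr_sqrtr.
Qed.

Lemma exists_near1 (R : realType) (G : R -> R) (V : R) :
  G x @[x --> 1^'-] --> G 1 -> V < G 1 -> exists t0, [/\ 0 < t0, t0 < 1 & V < G t0].
Proof.
move=> lim1 V1.
have nearG := cvgr_gt (G 1) lim1 V V1.
near (1:R)^'- => t.
exists t; split.
- by near: t; apply: nbhs_left_gt; exact: ltr01.
- by near: t; exact: nbhs_left_lt.
- by near: t; exact: nearG.
Unshelve. all: by end_near.
Qed.

Theorem lemma2p2 (R : realType) (k1 k2 C : R)
  (hk1 : 0 < k1) (hk2 : 0 < k2) (hC : 0 <= C) :
  exists K : R, 0 < K /\
  forall (f G : R -> R),
    {within `]0, 1], continuous f} ->
    (forall t, 0 < t <= 1 -> 0 <= f t) ->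
    (\int[lebesgue_measure]_(x in `]0%R, 1%R]) (f x)%:E < +oo)%E ->
    {within `[0, 1], continuous G} ->
    (forall t, 0 <= t <= 1 -> 0 <= G t) ->
    G 0 = 0 ->
    (forall t, 0 < t < 1 -> derivable G t 1) ->
    {within `]0, 1[, continuous (derive1 G)} ->
    (forall t, 0 < t < 1 ->
       derive1 G t <= C * t `^ (k1 - 1) * G t + f t * Num.sqrt (G t)
                  + C * t `^ (k2 - 1)) ->
    forall t, 0 <= t <= 1 ->
      G t <= K * ((fine (\int[lebesgue_measure]_(x in `]0%R, t]) (f x)%:E)) ^+ 2
                  + t `^ k2).
Proof.
have D0 : 0 <= C / k2 by apply: divr_ge0 => //; exact: ltW.
exists (expR (C / k1) ^+ 2 * (1 + 2 * (C / k2))); split.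
  apply: mulr_gt0; first by apply: exprn_gt0; exact: expR_gt0.
  lra.
move=> f G cf f0 fint cG G0 Gat0 dG _ ineq t /andP[t0 t1].
set K := expR (C / k1) ^+ 2 * (1 + 2 * (C / k2)).
have K0 : 0 <= K.
  apply: mulr_ge0; first by apply: exprn_ge0; exact: expR_ge0.
  lra.
have [->|tn0] := eqVneq t 0.
  rewrite Gat0; apply: mulr_ge0 => //; apply: addr_ge0; [exact: sqr_ge0 | exact: powR_ge0].
have tpos : 0 < t by rewrite lt_def tn0 t0.
have [t1'|->] : t < 1 \/ t = 1.
  by move: t1; rewrite le_eqVlt => /orP[/eqP->|->]; [right|left].
  exact: mainlt.
set F1 := fine _.
rewrite powR1 /=.
have lim1 : G x @[x --> 1^'-] --> G 1.
  by have [_ _ h] := (continuous_within_itvP G ltr01).1 cG.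
rewrite leNgt; apply/negP => hlt.
have [s [s0 s1 Gs]] := exists_near1 R G _ lim1 hlt.
have := mainlt R k1 k2 C f G s hk1 hk2 hC cf f0 fint cG G0 Gat0 dG ineq s0 s1.
have sub : `]0, s] `<=` `]0, 1] by apply: subset_itv; rewrite bnd_simp; lra.
have [Fs0 _ Fs] := Ffacts R f cf f0 fint `]0, s] `]0, 1] (measurable_itv _) (measurable_itv _) sub (@subset_refl _ _).
have {}Fs0 : 0 <= fine (\int[lebesgue_measure]_(x in `]0%R, s]) (f x)%:E) by apply: fine_ge0.
have ps : s `^ k2 <= 1.
  have := @ge0_ler_powR R k2 (ltW hk2) s 1; rewrite powR1 !nnegrE; apply => //; lra.
have sq : fine (\int[lebesgue_measure]_(x in `]0%R, s]) (f x)%:E) ^+ 2 <= F1 ^+ 2.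
  by rewrite ler_sqr // nnegrE; apply: le_trans Fs.
have := ler_wpM2l K0 (lerD sq ps).
rewrite -/K; move=> h1 h2.
have := lt_le_trans Gs (le_trans h2 h1).
by rewrite ltxx.
Qed.
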